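(* Let $K_\infty$ be the monoid given by the monoid presentation $\langle e,b\mid e^2=e,\ b^2=1\rangle$. For every $n\ge1$, the Zimin word $Z_n$ is an isoterm relative to $K_\infty$. That is, if $w$ is a word such that $K_\infty$ satisfies the identity $Z_n\approx w$, then $w=Z_n$ as words.
   Context: Let $x_1,x_2,\dots$ be letters. The Zimin words are defined inductively by $Z_1=x_1$ and $Z_{n+1}=Z_n\,x_{n+1}\,Z_n$. A word $v$ is an isoterm relative to a semigroup $S$ if the only word $v'$ such that $S$ satisfies the identity $v\approx v'$ is $v'=v$ itself. *)

(* Defs.v *)
From mathcomp Require Import all_boot.
Set Implicit Arguments. Unset Strict Implicit. Unset Printing Implicit Defensive.

Inductive Kgen : Type := Ke | Kb.

Inductive Kcong : seq Kgen -> seq Kgen -> Prop :=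
  | Kcong_refl u : Kcong u u
  | Kcong_sym u v : Kcong u v -> Kcong v u
  | Kcong_trans u v w : Kcong u v -> Kcong v w -> Kcong u w
  | Kcong_ee p q : Kcong (p ++ [:: Ke; Ke] ++ q) (p ++ [:: Ke] ++ q)
  | Kcong_bb p q : Kcong (p ++ [:: Kb; Kb] ++ q) (p ++ q).

Definition word := seq nat.

(* Zimin words: zimin 1 = x_1, zimin (n+1) = zimin n x_(n+1) zimin n
   (zimin 0 is the empty word, used only to start the recursion). *)
Fixpoint zimin (n : nat) : word :=
  match n with
  | 0 => [::]
  | n'.+1 => zimin n' ++ [:: n'.+1] ++ zimin n'
  end.

(* Image of a word under a substitution of the variables by elements of
   K_infinity (represented by words over the generators). *)
Definition Ksubst (s : nat -> seq Kgen) (w : word) : seq Kgen :=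
  flatten (map s w).

Definition Ksatisfies (u v : word) : Prop :=
  forall s : nat -> seq Kgen, Kcong (Ksubst s u) (Ksubst s v).

Definition Kisoterm (v : word) : Prop :=
  forall v' : word, Ksatisfies v v' -> v' = v.

(* Main.v *)
Require Import Defs.
From mathcomp Require Import all_boot.
From mathcomp Require Import zify.
Set Implicit Arguments. Unset Strict Implicit.

Definition step (st : seq Kgen) (x : Kgen) : seq Kgen :=
  match x, st with
  | Ke, Ke :: _ => st
  | Kb, Kb :: st' => st'
  | _, _ => x :: st
  end.

Definition stk (t : seq Kgen) := foldl step [::] t.

Definition kneq (x y : Kgen) : bool :=
  match x, y with Ke, Kb | Kb, Ke => true | _, _ => false end.

Fixpoint reduced (t : seq Kgen) : bool :=
  match t with
  | x :: ((y :: _) as t') => kneq x y && reduced t'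
  | _ => true
  end.

Lemma step_inv st x : reduced st -> reduced (step st x).
Proof.
case: x; case: st => [|y st] //=; case: y => //=; case: st => [|z st] //=;
  try (by move=> /andP[]); by [].
Qed.

Lemma foldl_inv t st : reduced st -> reduced (foldl step st t).
Proof. elim: t st => [|x t IH] st //= H; apply: IH; exact: step_inv. Qed.

Lemma ee st : step (step st Ke) Ke = step st Ke.
Proof. by case: st => [|[] st]. Qed.

Lemma bb st : reduced st -> step (step st Kb) Kb = st.
Proof. case: st => [|[] st] //=. case: st => [|[] st] //=. Qed.

Lemma Kcong_stk u v : Kcong u v -> stk u = stk v.
Proof.
rewrite /stk; elim => //.
- by move=> u0 v0 w0 H1 E1 H2 E2; rewrite E1.
- move=> p q; rewrite !foldl_cat /=. by rewrite -/(step _ Ke) ee.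
- move=> p q; rewrite !foldl_cat; congr (foldl _ _ q).
  change (step (step (foldl step [::] p) Kb) Kb = foldl step [::] p). rewrite bb //. exact: foldl_inv.
Qed.

Lemma stk_red_aux t x st : reduced (x :: t) ->
  foldl step (x :: st) t = catrev t (x :: st).
Proof.
elim: t x st => [|y t IH] x st //= /andP[Hxy Ht].
have -> : step (x :: st) y = y :: x :: st by case: x y Hxy {Ht} => [] [].
exact: IH.
Qed.

Lemma stk_red t : reduced t -> stk t = rev t.
Proof. case: t => [|x t] // H; rewrite /stk; have -> : foldl step [::] (x :: t) = foldl step [:: x] t by case: x {H}. by rewrite stk_red_aux. Qed.

Lemma step_size st x : size (step st x) <= (size st).+1 /\
  (size (step st x) = (size st).+1 -> step st x = x :: st).
Proof. case: x; case: st => [|[] st] //=; split => //; lia. Qed.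

Lemma foldl_size t st : size (foldl step st t) <= size st + size t /\
  (size (foldl step st t) = size st + size t -> foldl step st t = catrev t st).
Proof.
elim: t st => [|x t IH] st /=; first by rewrite addn0.
have [H1 H2] := step_size st x. have [H3 H4] := IH (step st x).
split; first lia.
move=> E. have E2 : size (step st x) = (size st).+1 by lia.
rewrite H4; last lia. by rewrite H2.
Qed.

Fixpoint ebk (k : nat) : seq Kgen :=
  match k with 0 => [::] | k'.+1 => Ke :: Kb :: ebk k' end.

Lemma ebk_red k : reduced (ebk k) /\ reduced (Kb :: ebk k).
Proof. elim: k => [|k [IH1 IH2]] //=. Qed.

Lemma Ksubst_cons s x u : Ksubst s (x :: u) = s x ++ Ksubst s u.
Proof. by []. Qed.

Lemma Ksat_size u v : Ksatisfies u v -> size u = size v.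
Proof.
move=> H; have := Kcong_stk (H (fun _ => [:: Ke; Kb])).
have E : forall w, Ksubst (fun _ => [:: Ke; Kb]) w = ebk (size w).
  by elim => [|x w IH] //=; rewrite Ksubst_cons IH.
rewrite !E !stk_red; try by case: (ebk_red (size u)); case: (ebk_red (size v)).
have S : forall k, size (ebk k) = k.*2 by elim => //= k ->.
move/(congr1 size); rewrite !size_rev !S ; exact: double_inj.
Qed.

Definition del (w : word) : word := map predn (filter (fun x => x != 1) w).

Lemma Ksubst_del s u :
  Ksubst s (del u) = Ksubst (fun x => if x == 1 then [::] else s x.-1) u.
Proof.
elim: u => [|x u IH] //=; rewrite Ksubst_cons -IH /del /=.
by case: (x == 1).
Qed.

Lemma Ksat_del u v : Ksatisfies u v -> Ksatisfies (del u) (del v).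
Proof. move=> H s; rewrite !Ksubst_del; exact: H. Qed.

Lemma del_cat u v : del (u ++ v) = del u ++ del v.
Proof. by rewrite /del filter_cat map_cat. Qed.

Lemma del_zimin n : del (zimin n.+1) = zimin n.
Proof.
elim: n => [|n IH]; first by [].
have -> : zimin n.+2 = zimin n.+1 ++ [:: n.+2] ++ zimin n.+1 by []. rewrite (del_cat (zimin n.+1)) (del_cat [:: n.+2]) IH.
done.
Qed.

Lemma zimin_pos n : all (fun x => 0 < x) (zimin n).
Proof. elim: n => [|n IH]; first by []. have -> : zimin n.+1 = zimin n ++ [:: n.+1] ++ zimin n by []. by rewrite (all_cat _ (zimin n)) IH. Qed.

Lemma filter_gt1 u : all (fun x => 0 < x) u ->
  all (fun x => 1 < x) (filter (fun x => x != 1) u).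
Proof.
elim: u => [|x u IH] //= /andP[Hx Hu].
case: eqP => /= [_|Hne]; first exact: IH.
rewrite IH // andbT. lia.
Qed.

Lemma map_pred_inj l1 l2 : all (fun x => x != 1) l1 -> all (fun x => 1 < x) l2 ->
  map predn l1 = map predn l2 -> l1 = l2.
Proof.
elim: l1 l2 => [|x l1 IH] [|y l2] //= /andP[Hx H1] /andP[Hy H2] [E1 E2].
rewrite (IH l2) //. f_equal. lia.
Qed.

Lemma all_filter_ne u : all (fun x => x != 1) (filter (fun x => x != 1) u).
Proof. elim: u => [|x u IH] //=; case: (eqVneq x 1) => Hx //=; by rewrite Hx. Qed.

Definition fk (x : nat) : Kgen := if x == 1 then Ke else Kb.

Fixpoint altk (k : nat) : seq Kgen :=
  match k with 0 => [:: Ke] | k'.+1 => Ke :: Kb :: altk k' end.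

Lemma altk_cat a c : altk a ++ Kb :: altk c = altk (a + c).+1.
Proof. elim: a => [|a IH] //=. by rewrite IH. Qed.

Lemma altk_red k : reduced (altk k).
Proof. elim: k => [|k IH] //=. by case: k IH. Qed.

Lemma zimin_fk n : exists k, map fk (zimin n.+1) = altk k.
Proof.
elim: n => [|n [k IH]]; first by exists 0.
exists (k + k).+1. have -> : zimin n.+2 = zimin n.+1 ++ [:: n.+2] ++ zimin n.+1 by []. rewrite (map_cat _ (zimin n.+1)) (map_cat _ [:: n.+2]) IH.
by rewrite -altk_cat.
Qed.

Lemma Ksubst_fk u : Ksubst (fun x => if x == 1 then [:: Ke] else [:: Kb]) u = map fk u.
Proof. elim: u => [|x u IH] //=. rewrite Ksubst_cons IH /fk. by case: (x == 1). Qed.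

Lemma combine u v : map fk u = map fk v ->
  filter (fun x => x != 1) u = filter (fun x => x != 1) v -> u = v.
Proof.
elim: u v => [|x u IH] [|y v] //= [E1 E2].
rewrite /fk in E1.
case: (eqVneq x 1) E1 => [->|Hx]; case: (eqVneq y 1) => [->|Hy] //= _.
- move=> F; by rewrite (IH v).
- by move=> [-> F]; rewrite (IH v).
Qed.

Theorem mainTheorem4 (n : nat) : 1 <= n -> Kisoterm (zimin n).
Proof.
move=> _. elim: n => [|n IH] w H.
  by move: (Ksat_size H); case: {H} w.
have Hs := Ksat_size H.
have Hd : del w = zimin n.
  apply: IH. rewrite -{1}del_zimin. exact: Ksat_del.
have Hf : filter (fun x => x != 1) w = filter (fun x => x != 1) (zimin n.+1).
  apply: map_pred_inj; [exact: all_filter_ne | apply: filter_gt1; exact: zimin_pos|].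
  by rewrite -/(del w) Hd -del_zimin.
have Hm : map fk w = map fk (zimin n.+1).
  have := Kcong_stk (H (fun x => if x == 1 then [:: Ke] else [:: Kb])).
  rewrite !Ksubst_fk.
  have [k Ek] := zimin_fk n. rewrite Ek stk_red ?altk_red // => E.
  have [_ F] := foldl_size (map fk w) [::].
  have : foldl step [::] (map fk w) = catrev (map fk w) [::].
    apply: F. rewrite -/(stk _) -E size_rev -Ek !size_map /=. by rewrite Hs.
  rewrite -/(stk _) -E => /(congr1 rev). rewrite revK -/(rev _) revK => <-.
  by [].
by apply: combine.
Qed.
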